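(* Let $I\subset\mathbb R$ be an open interval and $Q,P\colon I\to S^2_0(\mathbb R^4)$ smooth maps with $\det Q(t)<0$ for all $t$, satisfying \[Q'=P,\qquad \big((P^2)_0\big)'=-\frac{4\,(\operatorname{Adj}Q)_0}{\sqrt{-\det Q}},\qquad \operatorname{tr}(P^3)=12\sqrt{-\det Q}.\] Then $Q(t)$ lies in a fixed one-dimensional subspace of $S^2_0(\mathbb R^4)$ for all $t\in I$ if and only if there exist $g\in\mathrm{SO}(4)$ and $t_0\in\mathbb R\setminus I$ such that \[Q(t)=-\frac{(t-t_0)^3}{18\sqrt3}\,gDg^T,\qquad P(t)=-\frac{(t-t_0)^2}{6\sqrt3}\,gDg^T\qquad(t\in I),\] where $D=\operatorname{diag}(-3,1,1,1)$. (This solution corresponds to the $\mathrm{G}_2$ cone metric over $S^3\times S^3$ with its invariant nearly-Kähler structure.)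
   Context: $S^2_0(\mathbb R^4)$ is the space of real symmetric trace-free $4\times4$ matrices; $X_0=X-\frac14(\operatorname{tr}X)I$; $\operatorname{Adj}$ is the adjugate. In the paper, these equations are the matrix form of the $\mathrm{G}_2$ evolution equations $\partial_t\gamma=d\omega$, $\partial_t(\omega^2)=-2d\hat\gamma$ for left-invariant half-flat structures on $S^3\times S^3$ with $[\gamma]=0$, together with the volume normalisation; $P$ encodes $\omega$ and $Q$ a primitive of $\gamma$. *)

(* Defs.v *)
(* real analysis on Stdlib reals.  4x4 real matrices are
   represented as functions nat -> nat -> R, of which only the entries with
   indices 0..3 are meaningful; matrix equality is entrywise on 0..3. *)
From Stdlib Require Import Reals Lra.
Open Scope R_scope.

Definition Mat := nat -> nat -> R.

Definition meq (A B : Mat) : Prop :=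
  forall i j : nat, (i < 4)%nat -> (j < 4)%nat -> A i j = B i j.

Definition sum4 (f : nat -> R) : R := f 0%nat + f 1%nat + f 2%nat + f 3%nat.

Definition mmul (A B : Mat) : Mat := fun i j => sum4 (fun k => A i k * B k j).
Definition mtr (A : Mat) : Mat := fun i j => A j i.
Definition mscale (c : R) (A : Mat) : Mat := fun i j => c * A i j.
Definition mid : Mat := fun i j => if Nat.eqb i j then 1 else 0.
Definition mzero : Mat := fun _ _ => 0.
Definition trace (A : Mat) : R := sum4 (fun k => A k k).

Definition tf (A : Mat) : Mat := fun i j => A i j - / 4 * trace A * mid i j.

Definition skip (k m : nat) : nat := if Nat.ltb m k then m else S m.
Definition minor (i j : nat) (A : Mat) : Mat := fun r c => A (skip i r) (skip j c).

Definition det3 (A : Mat) : R :=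
  A 0%nat 0%nat * (A 1%nat 1%nat * A 2%nat 2%nat - A 1%nat 2%nat * A 2%nat 1%nat)
  - A 0%nat 1%nat * (A 1%nat 0%nat * A 2%nat 2%nat - A 1%nat 2%nat * A 2%nat 0%nat)
  + A 0%nat 2%nat * (A 1%nat 0%nat * A 2%nat 1%nat - A 1%nat 1%nat * A 2%nat 0%nat).

Definition det4 (A : Mat) : R :=
  sum4 (fun j => (-1) ^ j * A 0%nat j * det3 (minor 0 j A)).

Definition adj (A : Mat) : Mat := fun i j => (-1) ^ (i + j) * det3 (minor j i A).

Definition symmetric (A : Mat) : Prop := meq A (mtr A).
Definition in_S20 (A : Mat) : Prop := symmetric A /\ trace A = 0.

Definition in_SO4 (g : Mat) : Prop := meq (mmul g (mtr g)) mid /\ det4 g = 1.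

Definition Dmat : Mat := fun i j =>
  if Nat.eqb i j then (if Nat.eqb i 0 then -3 else 1) else 0.

Definition is_open_interval (I : R -> Prop) : Prop :=
  (exists x, I x) /\
  (forall x y z, I x -> I z -> x <= y <= z -> I y) /\
  (forall x, I x -> exists e, e > 0 /\ forall y, Rabs (y - x) < e -> I y).

Definition smooth_on (I : R -> Prop) (f : R -> R) : Prop :=
  exists fs : nat -> R -> R, fs 0%nat = f /\
    forall (n : nat) (t : R), I t -> derivable_pt_lim (fs n) t (fs (S n) t).

Definition msmooth_on (I : R -> Prop) (F : R -> Mat) : Prop :=
  forall i j, (i < 4)%nat -> (j < 4)%nat -> smooth_on I (fun t => F t i j).

Definition mderiv_on (I : R -> Prop) (F G : R -> Mat) : Prop :=
  forall t, I t -> forall i j, (i < 4)%nat -> (j < 4)%nat ->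
    derivable_pt_lim (fun s => F s i j) t (G t i j).

(* Main.v *)
Require Import Defs.
From Stdlib Require Import Reals Lra Lia Classical.
Open Scope R_scope.


Lemma lt4 (i : nat) : (i < 4)%nat -> i = 0%nat \/ i = 1%nat \/ i = 2%nat \/ i = 3%nat.
Proof. lia. Qed.
Ltac cases4 i Hi := destruct (lt4 i Hi) as [Ei|[Ei|[Ei|Ei]]]; subst i.
Ltac rwm H := repeat (rewrite H by lia).

Lemma det4_compat A B : meq A B -> det4 A = det4 B.
Proof. intro H; unfold meq in H; unfold det4, sum4, det3, minor, skip; simpl; rwm H; reflexivity. Qed.

Lemma tfsq_compat A B : meq A B -> meq (tf (mmul A A)) (tf (mmul B B)).
Proof. intros H i j Hi Hj; unfold meq in H; unfold tf, mmul, trace, sum4; rwm H; reflexivity. Qed.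

Lemma tfadj_compat A B : meq A B -> meq (tf (adj A)) (tf (adj B)).
Proof. intros H i j Hi Hj; unfold meq in H; cases4 i Hi; cases4 j Hj;
  unfold tf, adj, trace, sum4, det3, minor, skip; simpl; rwm H; reflexivity. Qed.

Lemma tr3_compat A B : meq A B -> trace (mmul A (mmul A A)) = trace (mmul B (mmul B B)).
Proof. intros H; unfold meq in H; unfold mmul, trace, sum4; rwm H; reflexivity. Qed.

Lemma det4_scale c A : det4 (mscale c A) = c ^ 4 * det4 A.
Proof. unfold det4, sum4, det3, minor, skip, mscale; simpl; ring. Qed.

Lemma tfadj_scale c A i j : (i < 4)%nat -> (j < 4)%nat ->
  tf (adj (mscale c A)) i j = c ^ 3 * tf (adj A) i j.
Proof. intros Hi Hj; cases4 i Hi; cases4 j Hj;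
  unfold tf, adj, trace, sum4, det3, minor, skip, mscale; simpl; ring. Qed.

Lemma tfsq_scale c A i j : tf (mmul (mscale c A) (mscale c A)) i j = c ^ 2 * tf (mmul A A) i j.
Proof. unfold tf, mmul, trace, sum4, mscale; ring. Qed.

Lemma tr3_scale c A : trace (mmul (mscale c A) (mmul (mscale c A) (mscale c A))) = c ^ 3 * trace (mmul A (mmul A A)).
Proof. unfold mmul, trace, sum4, mscale; ring. Qed.

Definition C3m (M : Mat) (kap : R) : Mat := fun i j => tf (adj M) i j - kap * tf (mmul M M) i j.

Lemma E_ident (M : Mat) (kap : R) :
  M 3%nat 3%nat = - M 0%nat 0%nat - M 1%nat 1%nat - M 2%nat 2%nat ->
  forall i j, (i < 4)%nat -> (j < 4)%nat ->
  let s2 := trace (mmul M M) in let s3 := trace (mmul M (mmul M M)) in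
  let e := s3 / 4 + kap * s2 / 4 in
  - kap ^ 2 * mmul M M i j + (kap * s2 / 2 - e + s3 / 3) * M i j + (kap * e - det4 M) * mid i j
  = - mmul M (C3m M kap) i j + kap * C3m M kap i j.
Proof.
intros H i j Hi Hj; cbv zeta. cases4 i Hi; cases4 j Hj;
apply Rminus_diag_uniq;
unfold C3m, tf, adj, mmul, trace, mid, det4, sum4, minor, det3, skip; simpl; rewrite H; field.
Time Qed.

Definition Q2m (M : Mat) (a c : R) : Mat := fun i j => mmul M M i j - a * M i j - c * mid i j.

Lemma F_ident (M : Mat) (a c : R) :
  M 3%nat 3%nat = - M 0%nat 0%nat - M 1%nat 1%nat - M 2%nat 2%nat ->
  forall i j, (i < 4)%nat -> (j < 4)%nat ->
  let s2 := trace (mmul M M) in let s3 := trace (mmul M (mmul M M)) in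
  (a^3 + 2*a*c - a*s2/2 - s3/3) * M i j + (c*(a^2+c) - c*s2/2 + det4 M) * mid i j
  + mmul (mmul M M) (Q2m M a c) i j + a * mmul M (Q2m M a c) i j
  + (a^2 + c - s2/2) * Q2m M a c i j = 0.
Proof.
intros H i j Hi Hj; cbv zeta. cases4 i Hi; cases4 j Hj;
unfold Q2m, mmul, trace, mid, det4, sum4, minor, det3, skip; simpl; rewrite H; field.
Time Qed.


Lemma trace_Q2 (M : Mat) a c : trace (mmul M (Q2m M a c)) =
  trace (mmul M (mmul M M)) - a * trace (mmul M M) - c * trace M.
Proof. unfold Q2m, trace, mmul, mid, sum4; simpl; ring. Qed.

Lemma core (M : Mat) (kap : R) k l : (k < 4)%nat -> (l < 4)%nat -> M k l <> 0 ->
  trace M = 0 -> det4 M < 0 ->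
  (forall i j, (i<4)%nat -> (j<4)%nat -> tf (adj M) i j = kap * tf (mmul M M) i j) ->
  exists b, b <> 0 /\ forall i j, (i<4)%nat -> (j<4)%nat ->
    mmul M M i j = -2*b*M i j + 3*b^2*mid i j.
Proof.
intros Hk Hl Hkl Htr Hdet Hrel.
assert (H33 : M 3%nat 3%nat = - M 0%nat 0%nat - M 1%nat 1%nat - M 2%nat 2%nat)
  by (unfold trace, sum4 in Htr; lra).
assert (HC3 : forall i j, (i<4)%nat -> (j<4)%nat -> C3m M kap i j = 0).
{ intros i j Hi Hj; unfold C3m; rewrite Hrel by auto; ring. }
assert (HMC : forall i j, (i<4)%nat -> (j<4)%nat -> mmul M (C3m M kap) i j = 0).
{ intros i j Hi Hj; unfold mmul, sum4; rwm HC3; ring. }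
pose proof (E_ident M kap H33) as HE. cbv zeta in HE.
set (s2 := trace (mmul M M)) in *. set (s3 := trace (mmul M (mmul M M))) in *.
set (dd := det4 M) in *.
set (al := kap * s2 / 2 - (s3 / 4 + kap * s2 / 4) + s3 / 3) in *.
set (be := kap * (s3 / 4 + kap * s2 / 4) - dd) in *.
assert (HE' : forall i j, (i<4)%nat -> (j<4)%nat ->
   - kap ^ 2 * mmul M M i j + al * M i j + be * mid i j = 0).
{ intros i j Hi Hj; rewrite HE by auto; rewrite HMC, HC3 by auto; ring. }
assert (Htr2 : s2 = mmul M M 0%nat 0%nat + mmul M M 1%nat 1%nat + mmul M M 2%nat 2%nat + mmul M M 3%nat 3%nat) by reflexivity.
assert (Htr1 : M 0%nat 0%nat + M 1%nat 1%nat + M 2%nat 2%nat + M 3%nat 3%nat = 0) by (unfold trace, sum4 in Htr; lra).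
assert (Hkap : kap <> 0).
{ intro Hk0. 
  pose proof (HE' 0%nat 0%nat ltac:(lia) ltac:(lia)) as E0.
  pose proof (HE' 1%nat 1%nat ltac:(lia) ltac:(lia)) as E1.
  pose proof (HE' 2%nat 2%nat ltac:(lia) ltac:(lia)) as E2.
  pose proof (HE' 3%nat 3%nat ltac:(lia) ltac:(lia)) as E3.
  unfold mid in E0, E1, E2, E3; simpl in E0, E1, E2, E3.
  assert (Hb : be = - dd) by (unfold be; rewrite Hk0; ring). rewrite Hb in *. unfold dd in *. nra. }
assert (Hk2 : kap ^ 2 <> 0) by (apply pow_nonzero; auto).
set (a := al / kap ^ 2). set (c := be / kap ^ 2).
assert (HQ2 : forall i j, (i<4)%nat -> (j<4)%nat -> Q2m M a c i j = 0).
{ intros i j Hi Hj. unfold Q2m, a, c.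
  transitivity (- (- kap ^ 2 * mmul M M i j + al * M i j + be * mid i j) / kap ^ 2).
  - field; auto.
  - rewrite HE' by auto. field; auto. }
assert (HMQ : forall i j, (i<4)%nat -> (j<4)%nat -> mmul M (Q2m M a c) i j = 0).
{ intros i j Hi Hj; unfold mmul at 1; unfold sum4; rwm HQ2; ring. }
assert (HMMQ : forall i j, (i<4)%nat -> (j<4)%nat -> mmul (mmul M M) (Q2m M a c) i j = 0).
{ intros i j Hi Hj; unfold mmul at 1; unfold sum4 at 1; rwm HQ2; ring. }
pose proof (F_ident M a c H33) as HF. cbv zeta in HF. fold s2 s3 dd in HF.
set (al' := a ^ 3 + 2 * a * c - a * s2 / 2 - s3 / 3) in *.
set (be' := c * (a ^ 2 + c) - c * s2 / 2 + dd) in *.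
assert (HF' : forall i j, (i<4)%nat -> (j<4)%nat -> al' * M i j + be' * mid i j = 0).
{ intros i j Hi Hj. pose proof (HF i j Hi Hj) as X. rewrite HMMQ, HMQ, HQ2 in X by auto. lra. }
assert (Hbe' : be' = 0).
{ pose proof (HF' 0%nat 0%nat ltac:(lia) ltac:(lia)) as E0.
  pose proof (HF' 1%nat 1%nat ltac:(lia) ltac:(lia)) as E1.
  pose proof (HF' 2%nat 2%nat ltac:(lia) ltac:(lia)) as E2.
  pose proof (HF' 3%nat 3%nat ltac:(lia) ltac:(lia)) as E3.
  unfold mid in E0, E1, E2, E3; simpl in E0, E1, E2, E3. nra. }
assert (Hal' : al' = 0).
{ pose proof (HF' k l Hk Hl) as X. rewrite Hbe' in X.
  assert (al' * M k l = 0) by lra. destruct (Rmult_integral _ _ H); auto. contradiction. }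
assert (Hs2 : s2 = 4 * c).
{ pose proof (HQ2 0%nat 0%nat ltac:(lia) ltac:(lia)) as E0.
  pose proof (HQ2 1%nat 1%nat ltac:(lia) ltac:(lia)) as E1.
  pose proof (HQ2 2%nat 2%nat ltac:(lia) ltac:(lia)) as E2.
  pose proof (HQ2 3%nat 3%nat ltac:(lia) ltac:(lia)) as E3.
  unfold Q2m, mid in E0, E1, E2, E3; simpl in E0, E1, E2, E3. nra. }
assert (Hs3 : s3 = a * s2).
{ pose proof (trace_Q2 M a c) as X. fold s2 s3 in X. rewrite Htr in X.
  assert (trace (mmul M (Q2m M a c)) = 0).
  { unfold trace, sum4. rwm HMQ. ring. }
  lra. }
assert (Ha : a <> 0).
{ intro Ha0. unfold be' in Hbe'. rewrite Ha0, Hs2 in Hbe'.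
  assert (dd = c ^ 2) by nra. unfold dd in H. nra. }
assert (Ha2 : c = 3 * a ^ 2 / 4).
{ unfold al' in Hal'. rewrite Hs3, Hs2 in Hal'.
  assert (a * (a ^ 2 - 4 * c / 3) = 0) by nra.
  destruct (Rmult_integral _ _ H); [contradiction | lra]. }
exists (- a / 2). split. { intro X. apply Ha. lra. }
intros i j Hi Hj. pose proof (HQ2 i j Hi Hj) as X. unfold Q2m in X. rewrite Ha2 in X. lra.
Qed.


Lemma sum16_zero (f : nat -> nat -> R) :
  sum4 (fun i => sum4 (fun j => f i j ^ 2)) = 0 ->
  forall i j, (i<4)%nat -> (j<4)%nat -> f i j = 0.
Proof.
intros H i j Hi Hj. unfold sum4 in H.
assert (forall a b, 0 <= f a b ^ 2) by (intros; apply pow2_ge_0).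
assert (f i j ^ 2 = 0).
{ pose proof (H0 0%nat 0%nat); pose proof (H0 0%nat 1%nat); pose proof (H0 0%nat 2%nat); pose proof (H0 0%nat 3%nat);
  pose proof (H0 1%nat 0%nat); pose proof (H0 1%nat 1%nat); pose proof (H0 1%nat 2%nat); pose proof (H0 1%nat 3%nat);
  pose proof (H0 2%nat 0%nat); pose proof (H0 2%nat 1%nat); pose proof (H0 2%nat 2%nat); pose proof (H0 2%nat 3%nat);
  pose proof (H0 3%nat 0%nat); pose proof (H0 3%nat 1%nat); pose proof (H0 3%nat 2%nat); pose proof (H0 3%nat 3%nat).
  cases4 i Hi; cases4 j Hj; lra. }
apply Rsqr_0_uniq. unfold Rsqr. rewrite <- H1. ring.
Qed.

Lemma rank1 (Y : Mat) : symmetric Y -> trace Y = 0 ->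
  (forall i j, (i<4)%nat -> (j<4)%nat -> mmul Y Y i j = -2 * Y i j + 3 * mid i j) ->
  exists w : nat -> R, w 0%nat ^ 2 + w 1%nat ^ 2 + w 2%nat ^ 2 + w 3%nat ^ 2 = 1 /\
    forall i j, (i<4)%nat -> (j<4)%nat -> Y i j = mid i j - 4 * w i * w j.
Proof.
intros Hs Htr HY.
set (W := fun i j => (mid i j - Y i j) / 4).
assert (HWs : forall i j, (i<4)%nat -> (j<4)%nat -> W i j = W j i).
{ intros i j Hi Hj; unfold W; rewrite (Hs i j Hi Hj); unfold mtr, mid. rewrite Nat.eqb_sym. reflexivity. }
assert (HW2 : forall i j, (i<4)%nat -> (j<4)%nat -> mmul W W i j = W i j).
{ intros i j Hi Hj.
  assert (X : mmul W W i j - W i j = (mmul Y Y i j + 2 * Y i j - 3 * mid i j) / 16).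
  { cases4 i Hi; cases4 j Hj; unfold W, mmul, mid, sum4; simpl; field. }
  rewrite HY in X by auto. lra. }
assert (HtrW : W 0%nat 0%nat + W 1%nat 1%nat + W 2%nat 2%nat + W 3%nat 3%nat = 1).
{ unfold W, mid; simpl. unfold trace, sum4 in Htr. lra. }
assert (Hk : exists k, (k<4)%nat /\ W k k <> 0).
{ destruct (Req_dec (W 0%nat 0%nat) 0); [|exists 0%nat; split; [lia|auto]].
  destruct (Req_dec (W 1%nat 1%nat) 0); [|exists 1%nat; split; [lia|auto]].
  destruct (Req_dec (W 2%nat 2%nat) 0); [|exists 2%nat; split; [lia|auto]].
  exists 3%nat; split; [lia|]. lra. }
destruct Hk as [k [Hk Hkk]].
assert (HS2 : sum4 (fun i => W i k ^ 2) = W k k).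
{ rewrite <- (HW2 k k Hk Hk). unfold mmul, sum4.
  rewrite (HWs k 0%nat), (HWs k 1%nat), (HWs k 2%nat), (HWs k 3%nat) by lia. ring. }
assert (Hpos : 0 < W k k).
{ assert (0 <= W k k). { rewrite <- HS2. unfold sum4.
    pose proof (pow2_ge_0 (W 0%nat k)); pose proof (pow2_ge_0 (W 1%nat k));
    pose proof (pow2_ge_0 (W 2%nat k)); pose proof (pow2_ge_0 (W 3%nat k)). lra. }
  lra. }
assert (HS1 : sum4 (fun i => sum4 (fun j => W i j ^ 2)) = 1).
{ transitivity (sum4 (fun i => mmul W W i i)).
  { unfold mmul, sum4.
    rewrite (HWs 1%nat 0%nat), (HWs 2%nat 0%nat), (HWs 3%nat 0%nat), (HWs 2%nat 1%nat),
      (HWs 3%nat 1%nat), (HWs 3%nat 2%nat) by lia. ring. }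
  unfold sum4. rwm HW2. exact HtrW. }
assert (HS3 : sum4 (fun i => sum4 (fun j => W i j * W i k * W j k)) = W k k).
{ transitivity (sum4 (fun i => W i k * mmul W W i k)).
  { unfold mmul, sum4. ring. }
  transitivity (sum4 (fun i => W i k ^ 2)).
  { unfold sum4. rwm HW2. ring. }
  exact HS2. }
assert (HZ : sum4 (fun i => sum4 (fun j => (W i j * W k k - W i k * W j k) ^ 2)) = 0).
{ transitivity (W k k ^ 2 * sum4 (fun i => sum4 (fun j => W i j ^ 2))
     - 2 * W k k * sum4 (fun i => sum4 (fun j => W i j * W i k * W j k))
     + (sum4 (fun i => W i k ^ 2)) ^ 2).
  { unfold sum4. ring. }
  rewrite HS1, HS3, HS2. ring. }
pose proof (sum16_zero _ HZ) as HZ0.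
assert (Hsq : sqrt (W k k) * sqrt (W k k) = W k k) by (apply sqrt_sqrt; lra).
assert (Hsn : sqrt (W k k) <> 0) by (apply Rgt_not_eq, sqrt_lt_R0; lra).
exists (fun i => W i k / sqrt (W k k)). split.
- transitivity (sum4 (fun i => W i k ^ 2) / (sqrt (W k k) * sqrt (W k k))).
  { unfold sum4. field. auto. }
  rewrite HS2, Hsq. field. lra.
- intros i j Hi Hj.
  assert (Yij : Y i j = mid i j - 4 * W i j) by (unfold W; field).
  rewrite Yij. cbv beta.
  assert (W i j = W i k * W j k / (sqrt (W k k) * sqrt (W k k))).
  { rewrite Hsq. pose proof (HZ0 i j Hi Hj). field_simplify; [|lra]. 
    apply (Rmult_eq_reg_r (W k k)); [|lra]. field_simplify; [|lra]. lra. }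
  rewrite H. field. auto.
Qed.


Definition quat (w : nat -> R) : Mat := fun i j =>
  match i, j with
  | 0,0 => w 0%nat | 0,1 => - w 1%nat | 0,2 => - w 2%nat | 0,3 => - w 3%nat
  | 1,0 => w 1%nat | 1,1 => w 0%nat | 1,2 => - w 3%nat | 1,3 => w 2%nat
  | 2,0 => w 2%nat | 2,1 => w 3%nat | 2,2 => w 0%nat | 2,3 => - w 1%nat
  | 3,0 => w 3%nat | 3,1 => - w 2%nat | 3,2 => w 1%nat | 3,3 => w 0%nat
  | _,_ => 0 end.
Definition Sw (w : nat -> R) := w 0%nat ^ 2 + w 1%nat ^ 2 + w 2%nat ^ 2 + w 3%nat ^ 2.
Definition Yw (w : nat -> R) : Mat := fun i j => Sw w * mid i j - 4 * w i * w j.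

Lemma quat_orth w : meq (mmul (quat w) (mtr (quat w))) (mscale (Sw w) mid).
Proof. intros i j Hi Hj; cases4 i Hi; cases4 j Hj; unfold mmul, mtr, mscale, quat, Sw, mid, sum4; simpl; ring. Qed.
Lemma quat_det w : det4 (quat w) = Sw w ^ 2.
Proof. unfold det4, sum4, det3, minor, skip, quat, Sw; simpl; ring. Qed.
Lemma quat_G w : meq (mmul (quat w) (mmul Dmat (mtr (quat w)))) (Yw w).
Proof. intros i j Hi Hj; cases4 i Hi; cases4 j Hj; unfold Yw, mmul, mtr, Dmat, quat, Sw, mid, sum4; simpl; ring. Qed.
Lemma Yw_det w : det4 (Yw w) = -3 * Sw w ^ 4.
Proof. unfold det4, sum4, det3, minor, skip, Yw, mid, Sw; simpl; ring. Qed.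
Lemma Yw_tfsq w : meq (tf (mmul (Yw w) (Yw w))) (mscale (-2 * Sw w) (Yw w)).
Proof. intros i j Hi Hj; cases4 i Hi; cases4 j Hj; unfold tf, trace, mmul, mscale, Yw, mid, Sw, sum4; simpl; field. Qed.
Lemma Yw_tfadj w : meq (tf (adj (Yw w))) (mscale (- Sw w ^ 2) (Yw w)).
Proof. intros i j Hi Hj; cases4 i Hi; cases4 j Hj; unfold tf, trace, adj, det3, minor, skip, mscale, Yw, mid, Sw, sum4; simpl; field. Qed.
Lemma Yw_tr3 w : trace (mmul (Yw w) (mmul (Yw w) (Yw w))) = -24 * Sw w ^ 3.
Proof. unfold trace, mmul, Yw, mid, Sw, sum4; simpl; ring. Qed.


Lemma loc_deriv (f g : R -> R) x l e : e > 0 -> (forall y, Rabs (y - x) < e -> f y = g y) ->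
  derivable_pt_lim f x l -> derivable_pt_lim g x l.
Proof.
intros He Hfg Hf eps Heps.
destruct (Hf eps Heps) as [d Hd].
assert (Hm : 0 < Rmin d e) by (apply Rmin_pos; [apply cond_pos | lra]).
exists (mkposreal _ Hm). intros h Hh Hlt. simpl in Hlt.
assert (E1 : g (x + h) = f (x + h)).
{ symmetry; apply Hfg. replace (x + h - x) with h by ring.
  apply Rlt_le_trans with (1:=Hlt); apply Rmin_r. }
assert (E2 : g x = f x).
{ symmetry; apply Hfg. rewrite Rminus_diag, Rabs_R0; lra. }
rewrite E1, E2. apply Hd; auto. apply Rlt_le_trans with (1:=Hlt); apply Rmin_l.
Qed.

Lemma dpl_eq (f : R -> R) x l1 l2 : derivable_pt_lim f x l1 -> l1 = l2 -> derivable_pt_lim f x l2.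
Proof. intros H ->; exact H. Qed.

Lemma dpl_scal (f : R -> R) a x l : derivable_pt_lim f x l -> derivable_pt_lim (fun s => a * f s) x (a * l).
Proof. intro H. exact (derivable_pt_lim_scal f a x l H). Qed.

Lemma prop_deriv (I : R -> Prop) (Q P : R -> Mat) (M : Mat) k l :
  is_open_interval I -> (k<4)%nat -> (l<4)%nat -> M k l <> 0 ->
  (forall t, I t -> exists c, meq (Q t) (mscale c M)) ->
  mderiv_on I Q P ->
  forall t, I t -> meq (P t) (mscale (P t k l / M k l) M).
Proof.
intros HI Hk Hl Hkl HQ HD t Ht i j Hi Hj.
destruct HI as [_ [_ Hop]]. destruct (Hop t Ht) as [e [He Hne]].
assert (Hloc : forall y, Rabs (y - t) < e -> (fun s => M i j / M k l * Q s k l) y = (fun s => Q s i j) y).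
{ intros y Hy. destruct (HQ y (Hne y Hy)) as [c Hc]. simpl.
  rewrite (Hc i j Hi Hj), (Hc k l Hk Hl). unfold mscale. field. auto. }
pose proof (loc_deriv _ _ _ _ _ He Hloc (dpl_scal (fun s => Q s k l) (M i j / M k l) t (P t k l) (HD t Ht k l Hk Hl))) as X.
pose proof (uniqueness_limite _ _ _ _ X (HD t Ht i j Hi Hj)) as U.
unfold mscale. rewrite <- U. field. auto.
Qed.

Lemma sq_deriv (I : R -> Prop) (P : R -> Mat) (M : Mat) (d : R -> R) (Rm : R -> Mat) p q t :
  is_open_interval I -> (forall s, I s -> meq (P s) (mscale (d s) M)) ->
  mderiv_on I (fun s => tf (mmul (P s) (P s))) Rm -> I t ->
  (p<4)%nat -> (q<4)%nat -> tf (mmul M M) p q <> 0 ->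
  derivable_pt_lim (fun s => d s ^ 2) t (Rm t p q / tf (mmul M M) p q) /\
  forall i j, (i<4)%nat -> (j<4)%nat -> Rm t i j = tf (mmul M M) i j * (Rm t p q / tf (mmul M M) p q).
Proof.
intros HI HP HD Ht Hp Hq Hm.
destruct HI as [_ [_ Hop]]. destruct (Hop t Ht) as [e [He Hne]].
assert (Hf : forall s, I s -> forall i j, (i<4)%nat -> (j<4)%nat ->
   tf (mmul (P s) (P s)) i j = d s ^ 2 * tf (mmul M M) i j).
{ intros s Hs i j Hi Hj. rewrite (tfsq_compat _ _ (HP s Hs) i j Hi Hj). apply tfsq_scale. }
assert (D1 : derivable_pt_lim (fun s => d s ^ 2) t (Rm t p q / tf (mmul M M) p q)).
{ apply (loc_deriv (fun s => / tf (mmul M M) p q * tf (mmul (P s) (P s)) p q) _ _ _ e He).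
  - intros y Hy. rewrite (Hf y (Hne y Hy) p q Hp Hq). field. auto.
  - apply dpl_eq with (/ tf (mmul M M) p q * Rm t p q).
    + apply dpl_scal. exact (HD t Ht p q Hp Hq).
    + field; auto. }
split; auto.
intros i j Hi Hj.
assert (D2 : derivable_pt_lim (fun s => tf (mmul (P s) (P s)) i j) t
   (tf (mmul M M) i j * (Rm t p q / tf (mmul M M) p q))).
{ apply (loc_deriv (fun s => tf (mmul M M) i j * d s ^ 2) _ _ _ e He).
  - intros y Hy. rewrite (Hf y (Hne y Hy) i j Hi Hj). ring.
  - apply dpl_scal. exact D1. }
exact (uniqueness_limite _ _ _ _ (HD t Ht i j Hi Hj) D2).
Qed.

Lemma sq_deriv0 (I : R -> Prop) (P : R -> Mat) (M : Mat) (d : R -> R) (Rm : R -> Mat) t :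
  is_open_interval I -> (forall s, I s -> meq (P s) (mscale (d s) M)) ->
  mderiv_on I (fun s => tf (mmul (P s) (P s))) Rm -> I t ->
  (forall i j, (i<4)%nat -> (j<4)%nat -> tf (mmul M M) i j = 0) ->
  forall i j, (i<4)%nat -> (j<4)%nat -> Rm t i j = 0.
Proof.
intros HI HP HD Ht Hm i j Hi Hj.
destruct HI as [_ [_ Hop]]. destruct (Hop t Ht) as [e [He Hne]].
assert (D2 : derivable_pt_lim (fun s => tf (mmul (P s) (P s)) i j) t 0).
{ apply (loc_deriv (fct_cte 0) _ _ _ e He).
  - intros y Hy. unfold fct_cte. rewrite (tfsq_compat _ _ (HP y (Hne y Hy)) i j Hi Hj), tfsq_scale, Hm by auto. ring.
  - apply derivable_pt_lim_const. }
exact (uniqueness_limite _ _ _ _ (HD t Ht i j Hi Hj) D2).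
Qed.

Lemma const_on (I : R -> Prop) (H : R -> R) : is_open_interval I ->
  (forall t, I t -> derivable_pt_lim H t 0) -> forall x y, I x -> I y -> H x = H y.
Proof.
intros HI HD.
assert (forall x y, I x -> I y -> x < y -> H x = H y).
{ intros x y Hx Hy Hxy. destruct HI as [_ [Hc _]].
  destruct (MVT_cor2 H (fun _ => 0) x y Hxy) as [c [Hc1 _]].
  - intros c Hc'. apply HD. apply (Hc x c y); auto.
  - lra. }
intros x y Hx Hy. destruct (Rtotal_order x y) as [Hl|[He|Hg]].
- auto.
- subst; auto.
- symmetry; auto.
Qed.

Lemma ode (I : R -> Prop) (C E : R -> R) : is_open_interval I ->
  (forall t, I t -> C t <> 0) ->
  (forall t, I t -> E t ^ 3 = - (sqrt 3 / 2) * C t ^ 2) ->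
  (forall t, I t -> derivable_pt_lim C t (E t)) ->
  (forall t, I t -> derivable_pt_lim (fun s => E s ^ 2) t (-2 * C t / sqrt 3)) ->
  exists t0, ~ I t0 /\ forall t, I t ->
    C t = - (t - t0) ^ 3 / (18 * sqrt 3) /\ E t = - (t - t0) ^ 2 / (6 * sqrt 3).
Proof.
intros HI HC0 HE3 HdC HdE.
set (r := sqrt 3).
assert (Hr2 : r * r = 3) by (apply sqrt_sqrt; lra).
assert (Hr : 0 < r) by (apply sqrt_lt_R0; lra).
set (H := fun s => -2 / r * (E s ^ 2 / C s) - / 3 * id s).
assert (HdH : forall t, I t -> derivable_pt_lim H t 0).
{ intros t Ht.
  assert (X := derivable_pt_lim_div _ _ t _ _ (HdE t Ht) (HdC t Ht) (HC0 t Ht)).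
  assert (Y := dpl_scal _ (-2 / r) _ _ X).
  assert (W := dpl_scal id (/3) t 1 (derivable_pt_lim_id t)).
  assert (Z := derivable_pt_lim_minus _ _ t _ _ Y W).
  apply dpl_eq with (1 := Z).
  pose proof (HE3 t Ht) as E3. pose proof (HC0 t Ht). unfold Rsqr. fold r in E3.
  replace ((fun s : R => E s ^ 2) t) with (E t ^ 2) by reflexivity.
  replace (E t * E t ^ 2) with (E t ^ 3) by ring. rewrite E3.
  fold r. transitivity (4 / (r * r) - 4 / 3).
  - field. repeat split; (auto || lra).
  - rewrite Hr2. field. }
destruct HI as [[t1 Ht1] HI'].
set (t0 := - 3 * H t1).
assert (HH : forall t, I t -> H t = - t0 / 3).
{ intros t Ht. unfold t0. rewrite (const_on I H (conj (ex_intro _ t1 Ht1) HI') HdH t t1 Ht Ht1). field. }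
clearbody t0.
assert (HCE : forall t, I t -> C t = E t * (t - t0) / 3).
{ intros t Ht. pose proof (HH t Ht) as X. unfold H, id in X.
  pose proof (HE3 t Ht) as E3. fold r in E3. pose proof (HC0 t Ht).
  assert (E t * (-2 / r * (E t ^ 2 / C t)) = C t).
  { replace (E t * (-2 / r * (E t ^ 2 / C t))) with (-2 / r * (E t ^ 3 / C t)) by (field; repeat split; (auto || lra)).
    rewrite E3. field. repeat split; (auto || lra). }
  replace (t - t0) with (3 * (-2 / r * (E t ^ 2 / C t))) by lra. lra. }
exists t0. split.
{ intro Ht0. pose proof (HCE t0 Ht0). apply (HC0 t0 Ht0). rewrite H0. field. }
intros t Ht.
pose proof (HCE t Ht) as X. pose proof (HE3 t Ht) as E3. fold r in E3. pose proof (HC0 t Ht) as C0.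
fold r.
assert (Ht0 : t - t0 <> 0). { intro Z. apply C0. rewrite X, Z. field. }
assert (HE0 : E t <> 0). { intro Z. apply C0. rewrite X, Z. field. }
assert (HEv : E t = - r * (t - t0) ^ 2 / 18).
{ rewrite X in E3.
  assert (E t ^ 2 * (E t + r * (t - t0) ^ 2 / 18) = 0) by (rewrite <- (Rminus_diag_eq _ _ E3) at 1; field).
  destruct (Rmult_integral _ _ H0) as [Z|Z].
  - exfalso; exact (pow_nonzero _ 2 HE0 Z).
  - lra. }
split.
- rewrite X, HEv. apply Rminus_diag_uniq.
  transitivity ((t - t0) ^ 3 * (3 - r * r) / (54 * r)); [field; lra|]. rewrite Hr2. field. lra.
- rewrite HEv. apply Rminus_diag_uniq.
  transitivity ((t - t0) ^ 2 * (3 - r * r) / (18 * r)); [field; lra|]. rewrite Hr2. field. lra.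
Qed.


Lemma meq_trans A B C : meq A B -> meq B C -> meq A C.
Proof. intros H1 H2 i j Hi Hj. rewrite H1 by auto. auto. Qed.
Lemma meq_sym A B : meq A B -> meq B A.
Proof. intros H1 i j Hi Hj. symmetry. auto. Qed.
Lemma adj_mul A : meq (mmul (adj A) A) (mscale (det4 A) mid).
Proof. intros i j Hi Hj; cases4 i Hi; cases4 j Hj;
  unfold mmul, adj, mscale, mid, det4, sum4, minor, det3, skip; simpl; ring. Qed.
Lemma mmul_assoc A B C : meq (mmul (mmul A B) C) (mmul A (mmul B C)).
Proof. intros i j Hi Hj. unfold mmul, sum4. ring. Qed.
Lemma mmul_compat_r A B B' : meq B B' -> meq (mmul A B) (mmul A B').
Proof. intros H i j Hi Hj. unfold mmul, sum4. rwm H. reflexivity. Qed.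
Lemma mmul_compat_l A A' B : meq A A' -> meq (mmul A B) (mmul A' B).
Proof. intros H i j Hi Hj. unfold mmul, sum4. rwm H. reflexivity. Qed.
Lemma mmul_mid_r A : meq (mmul A mid) A.
Proof. intros i j Hi Hj. cases4 j Hj; unfold mmul, mid, sum4; simpl; ring. Qed.
Lemma mmul_smid_l c B : meq (mmul (mscale c mid) B) (mscale c B).
Proof. intros i j Hi Hj. cases4 i Hi; unfold mmul, mscale, mid, sum4; simpl; ring. Qed.

Lemma SO4_gtg g : in_SO4 g -> meq (mmul (mtr g) g) mid.
Proof.
intros [Hgg Hd].
assert (Ha : meq (adj g) (mtr g)).
{ apply meq_trans with (mmul (adj g) (mmul g (mtr g))).
  { apply meq_sym. apply meq_trans with (mmul (adj g) mid).
    - apply mmul_compat_r; auto.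
    - apply mmul_mid_r. }
  apply meq_trans with (mmul (mmul (adj g) g) (mtr g)).
  { apply meq_sym, mmul_assoc. }
  apply meq_trans with (mmul (mscale (det4 g) mid) (mtr g)).
  { apply mmul_compat_l, adj_mul. }
  rewrite Hd. apply meq_trans with (mscale 1 (mtr g)).
  { apply mmul_smid_l. }
  intros i j Hi Hj; unfold mscale; ring. }
apply meq_trans with (mmul (adj g) g).
{ apply mmul_compat_l. apply meq_sym; auto. }
apply meq_trans with (mscale (det4 g) mid). { apply adj_mul. }
rewrite Hd. intros i j Hi Hj; unfold mscale; ring.
Qed.

Lemma conv_dir (g : Mat) : in_SO4 g ->
  in_S20 (mmul g (mmul Dmat (mtr g))) /\ ~ meq (mmul g (mmul Dmat (mtr g))) mzero.
Proof.
intros Hg. pose proof (SO4_gtg g Hg) as H.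
assert (G00 : mmul (mtr g) g 0%nat 0%nat = 1) by (rewrite H by lia; reflexivity).
assert (G11 : mmul (mtr g) g 1%nat 1%nat = 1) by (rewrite H by lia; reflexivity).
assert (G22 : mmul (mtr g) g 2%nat 2%nat = 1) by (rewrite H by lia; reflexivity).
assert (G33 : mmul (mtr g) g 3%nat 3%nat = 1) by (rewrite H by lia; reflexivity).
assert (G01 : mmul (mtr g) g 0%nat 1%nat = 0) by (rewrite H by lia; reflexivity).
assert (G02 : mmul (mtr g) g 0%nat 2%nat = 0) by (rewrite H by lia; reflexivity).
assert (G03 : mmul (mtr g) g 0%nat 3%nat = 0) by (rewrite H by lia; reflexivity).
split; [split|].
- intros i j Hi Hj. unfold mtr, mmul, Dmat, sum4; simpl; ring.
- transitivity (-3 * mmul (mtr g) g 0%nat 0%nat + mmul (mtr g) g 1%nat 1%nat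
     + mmul (mtr g) g 2%nat 2%nat + mmul (mtr g) g 3%nat 3%nat).
  + unfold trace, mtr, mmul, Dmat, sum4; simpl; ring.
  + rewrite G00, G11, G22, G33. ring.
- intro Hz.
  assert (X : sum4 (fun i => sum4 (fun j => g i 0%nat * mmul g (mmul Dmat (mtr g)) i j * g j 0%nat)) = 0).
  { unfold sum4. rwm Hz. unfold mzero. ring. }
  assert (Y : sum4 (fun i => sum4 (fun j => g i 0%nat * mmul g (mmul Dmat (mtr g)) i j * g j 0%nat)) =
     -3 * mmul (mtr g) g 0%nat 0%nat ^ 2 + mmul (mtr g) g 0%nat 1%nat ^ 2
     + mmul (mtr g) g 0%nat 2%nat ^ 2 + mmul (mtr g) g 0%nat 3%nat ^ 2).
  { unfold mtr, mmul, Dmat, sum4; simpl; ring. }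
  rewrite G00, G01, G02, G03 in Y. lra.
Qed.


Lemma mmul_scale c A i j : mmul (mscale c A) (mscale c A) i j = c ^ 2 * mmul A A i j.
Proof. unfold mmul, mscale, sum4; ring. Qed.

Lemma sqrt_C4 c : sqrt (- (c ^ 4 * -3)) = sqrt 3 * c ^ 2.
Proof.
replace (- (c ^ 4 * -3)) with (3 * (c ^ 2 * c ^ 2)) by ring.
rewrite sqrt_mult; [| lra | apply Rmult_le_pos; apply pow2_ge_0 ].
rewrite sqrt_square; [reflexivity | apply pow2_ge_0].
Qed.

Theorem mainTheorem10 (I : R -> Prop) (Q P : R -> Mat) :
  is_open_interval I ->
  msmooth_on I Q -> msmooth_on I P ->
  (forall t, I t -> in_S20 (Q t) /\ in_S20 (P t)) ->
  (forall t, I t -> det4 (Q t) < 0) ->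
  mderiv_on I Q P ->
  mderiv_on I (fun t => tf (mmul (P t) (P t)))
    (fun t => mscale (- 4 / sqrt (- det4 (Q t))) (tf (adj (Q t)))) ->
  (forall t, I t -> trace (mmul (P t) (mmul (P t) (P t))) = 12 * sqrt (- det4 (Q t))) ->
  ((exists M : Mat, in_S20 M /\ ~ meq M mzero /\
      forall t, I t -> exists c : R, meq (Q t) (mscale c M))
   <->
   (exists (g : Mat) (t0 : R), in_SO4 g /\ ~ I t0 /\
      forall t, I t ->
        meq (Q t) (mscale (- (t - t0) ^ 3 / (18 * sqrt 3)) (mmul g (mmul Dmat (mtr g)))) /\
        meq (P t) (mscale (- (t - t0) ^ 2 / (6 * sqrt 3)) (mmul g (mmul Dmat (mtr g)))))).
Proof.
intros HI HsQ HsP HS20 Hdet HQP HPP Htr3.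
set (Rm := fun t => mscale (- 4 / sqrt (- det4 (Q t))) (tf (adj (Q t)))) in HPP.
split.
- intros [M [[HMs HMt] [HMnz HQM]]].
  assert (Hkl : exists k l, (k<4)%nat /\ (l<4)%nat /\ M k l <> 0).
  { apply NNPP. intro Hn. apply HMnz. intros i j Hi Hj. unfold mzero. apply NNPP. intro Hne.
    apply Hn. exists i, j. auto. }
  destruct Hkl as [k [l [Hk [Hl Hkl]]]].
  pose proof (prop_deriv I Q P M k l HI Hk Hl Hkl HQM HQP) as HPM.
  pose proof HI as HI0. destruct HI0 as [[t1 Ht1] _].
  destruct (HQM t1 Ht1) as [c1 Hc1].
  assert (HdQ1 : det4 (Q t1) = c1 ^ 4 * det4 M) by (rewrite (det4_compat _ _ Hc1); apply det4_scale).
  pose proof (Hdet t1 Ht1) as Hd1.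
  assert (Hc10 : c1 <> 0).
  { intro Z. rewrite Z in HdQ1. rewrite HdQ1 in Hd1. simpl in Hd1. lra. }
  assert (HdM : det4 M < 0).
  { pose proof (Rsqr_pos_lt c1 Hc10) as Hs. unfold Rsqr in Hs.
    assert (0 < c1 ^ 4) by (replace (c1 ^ 4) with ((c1 * c1) * (c1 * c1)) by ring; nra).
    rewrite HdQ1 in Hd1. nra. }
  assert (Hrel : exists kap, forall i j, (i<4)%nat -> (j<4)%nat -> tf (adj M) i j = kap * tf (mmul M M) i j).
  { set (sq1 := sqrt (- det4 (Q t1))).
    assert (Hsq1 : 0 < sq1) by (apply sqrt_lt_R0; lra).
    assert (HR : forall i j, (i<4)%nat -> (j<4)%nat -> Rm t1 i j = -4 / sq1 * (c1 ^ 3 * tf (adj M) i j)).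
    { intros i j Hi Hj. unfold Rm, mscale. fold sq1.
      rewrite (tfadj_compat _ _ Hc1 i j Hi Hj), tfadj_scale by auto. reflexivity. }
    assert (Hc3 : c1 ^ 3 <> 0) by (apply pow_nonzero; auto).
    destruct (classic (exists p q, (p<4)%nat /\ (q<4)%nat /\ tf (mmul M M) p q <> 0))
      as [[p [q [Hp [Hq Hpq]]]] | Hno].
    + destruct (sq_deriv I P M (fun s => P s k l / M k l) Rm p q t1 HI HPM HPP Ht1 Hp Hq Hpq) as [_ H2].
      exists (- sq1 * (Rm t1 p q / tf (mmul M M) p q) / (4 * c1 ^ 3)).
      intros i j Hi Hj. pose proof (H2 i j Hi Hj) as X. rewrite HR in X by auto.
      transitivity ((-4 / sq1 * (c1 ^ 3 * tf (adj M) i j)) * (- sq1 / (4 * c1 ^ 3))).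
      { field. split; lra || auto. }
      rewrite X. field. split; lra || auto.
    + exists 0. intros i j Hi Hj.
      assert (Hm0 : forall p q, (p<4)%nat -> (q<4)%nat -> tf (mmul M M) p q = 0).
      { intros p q Hp Hq. apply NNPP. intro Z. apply Hno. exists p, q. auto. }
      pose proof (sq_deriv0 I P M (fun s => P s k l / M k l) Rm t1 HI HPM HPP Ht1 Hm0 i j Hi Hj) as X.
      rewrite HR in X by auto.
      assert (c1 ^ 3 * tf (adj M) i j = 0).
      { apply (Rmult_eq_reg_l (-4 / sq1)). rewrite X. ring.
        apply Rmult_integral_contrapositive_currified; [lra | apply Rinv_neq_0_compat; lra]. }
      destruct (Rmult_integral _ _ H) as [Z|Z]; [contradiction|]. rewrite Z. ring. }
  destruct Hrel as [kap Hrel].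
  destruct (core M kap k l Hk Hl Hkl HMt HdM Hrel) as [b [Hb0 Hb]].
  set (Y := mscale (/ b) M).
  assert (HYs : symmetric Y).
  { intros i j Hi Hj. unfold Y, mscale, mtr. rewrite (HMs i j Hi Hj). reflexivity. }
  assert (HYt : trace Y = 0).
  { unfold Y, trace, mscale, sum4. unfold trace, sum4 in HMt.
    replace 0 with (/ b * 0) by ring. rewrite <- HMt. ring. }
  assert (HY2 : forall i j, (i<4)%nat -> (j<4)%nat -> mmul Y Y i j = -2 * Y i j + 3 * mid i j).
  { intros i j Hi Hj. unfold Y. rewrite mmul_scale, Hb by auto. unfold mscale. field. auto. }
  destruct (rank1 Y HYs HYt HY2) as [w [Hw1 Hw]].
  assert (HSw : Sw w = 1) by exact Hw1.
  set (g := quat w). set (G := mmul g (mmul Dmat (mtr g))).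
  assert (HGYw : meq G (Yw w)) by apply quat_G.
  assert (HGY : meq G Y).
  { intros i j Hi Hj. rewrite HGYw by auto. unfold Yw. rewrite HSw, Hw by auto. ring. }
  assert (HMG : meq M (mscale b G)).
  { intros i j Hi Hj. unfold mscale. rewrite HGY by auto. unfold Y, mscale. field. auto. }
  assert (Hg : in_SO4 g).
  { split.
    - intros i j Hi Hj. unfold g. rewrite quat_orth by auto. unfold mscale. rewrite HSw. ring.
    - unfold g. rewrite quat_det, HSw. ring. }
  assert (HGkl : G k l <> 0).
  { intro Z. apply Hkl. rewrite HMG by auto. unfold mscale. rewrite Z. ring. }
  assert (HQG : forall t, I t -> exists c, meq (Q t) (mscale c G)).
  { intros t Ht. destruct (HQM t Ht) as [c Hc]. exists (c * b). intros i j Hi Hj.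
    rewrite Hc by auto. unfold mscale. rewrite HMG by auto. unfold mscale. ring. }
  pose proof (prop_deriv I Q P G k l HI Hk Hl HGkl HQG HQP) as HPG.
  set (C := fun s => / G k l * Q s k l). set (E := fun s => / G k l * P s k l).
  assert (HQC : forall t, I t -> meq (Q t) (mscale (C t) G)).
  { intros t Ht. destruct (HQG t Ht) as [c Hc]. intros i j Hi Hj.
    rewrite (Hc i j Hi Hj). unfold C, mscale. rewrite (Hc k l Hk Hl). unfold mscale. field. auto. }
  assert (HPE : forall t, I t -> meq (P t) (mscale (E t) G)).
  { intros t Ht i j Hi Hj. rewrite (HPG t Ht i j Hi Hj). unfold E, mscale. field. auto. }
  assert (HGdet : det4 G = -3).
  { rewrite (det4_compat _ _ HGYw), Yw_det, HSw. ring. }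
  assert (HGsq : forall i j, (i<4)%nat -> (j<4)%nat -> tf (mmul G G) i j = -2 * G i j).
  { intros i j Hi Hj. rewrite (tfsq_compat _ _ HGYw i j Hi Hj), Yw_tfsq by auto.
    unfold mscale. rewrite (HGYw i j Hi Hj), HSw. ring. }
  assert (HGadj : forall i j, (i<4)%nat -> (j<4)%nat -> tf (adj G) i j = - G i j).
  { intros i j Hi Hj. rewrite (tfadj_compat _ _ HGYw i j Hi Hj), Yw_tfadj by auto.
    unfold mscale. rewrite (HGYw i j Hi Hj), HSw. ring. }
  assert (HGtr : trace (mmul G (mmul G G)) = -24).
  { rewrite (tr3_compat _ _ HGYw), Yw_tr3, HSw. ring. }
  set (r := sqrt 3).
  assert (Hr : 0 < r) by (apply sqrt_lt_R0; lra).
  assert (HdQ : forall t, I t -> det4 (Q t) = C t ^ 4 * -3).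
  { intros t Ht. rewrite (det4_compat _ _ (HQC t Ht)), det4_scale, HGdet. reflexivity. }
  assert (HC0 : forall t, I t -> C t <> 0).
  { intros t Ht Z. pose proof (Hdet t Ht). rewrite HdQ, Z in H by auto. simpl in H. lra. }
  assert (Hsq : forall t, I t -> sqrt (- det4 (Q t)) = r * C t ^ 2).
  { intros t Ht. rewrite HdQ by auto. apply sqrt_C4. }
  assert (HE3 : forall t, I t -> E t ^ 3 = - (sqrt 3 / 2) * C t ^ 2).
  { intros t Ht. pose proof (Htr3 t Ht) as X. rewrite (tr3_compat _ _ (HPE t Ht)), tr3_scale, HGtr, Hsq in X by auto.
    fold r. lra. }
  assert (HdC : forall t, I t -> derivable_pt_lim C t (E t)).
  { intros t Ht. apply dpl_scal. exact (HQP t Ht k l Hk Hl). }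
  assert (HdE : forall t, I t -> derivable_pt_lim (fun s => E s ^ 2) t (-2 * C t / sqrt 3)).
  { intros t Ht.
    assert (Hm : tf (mmul G G) k l <> 0) by (rewrite HGsq by auto; intro; apply HGkl; lra).
    destruct (sq_deriv I P G E Rm k l t HI HPE HPP Ht Hk Hl Hm) as [D _].
    apply dpl_eq with (1 := D).
    unfold Rm, mscale. rewrite Hsq, HGsq by auto.
    rewrite (tfadj_compat _ _ (HQC t Ht) k l Hk Hl), tfadj_scale, HGadj by auto.
    fold r. pose proof (HC0 t Ht). field. repeat split; (auto || lra). }
  destruct (ode I C E HI HC0 HE3 HdC HdE) as [t0 [Ht0 HCt]].
  exists g, t0. split; [exact Hg|]. split; [exact Ht0|].
  intros t Ht. destruct (HCt t Ht) as [HCv HEv]. fold r in HCv, HEv. split.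
  + rewrite <- HCv. apply HQC; auto.
  + rewrite <- HEv. apply HPE; auto.
- intros [g [t0 [Hg [Ht0 Hform]]]].
  destruct (conv_dir g Hg) as [HS HNZ].
  exists (mmul g (mmul Dmat (mtr g))). split; [exact HS|]. split; [exact HNZ|].
  intros t Ht. exists (- (t - t0) ^ 3 / (18 * sqrt 3)). apply Hform; auto.
Qed.
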